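(* Let $\Omega\subset\mathbb{C}$ be a domain and let $H$ be a continuous, nowhere-vanishing function of $(\mu,\mathcal{A},\mathcal{B})\in\mathbb{D}\times\mathbb{C}\times\mathbb{C}$ (where $\mathbb{D}$ is the open unit disk). For $D=(\mu,\mathcal{A},\mathcal{B},\mathcal{F})\in\mathcal{BV}(\Omega)$ set $\Theta_{F,D}:=\frac{|\mathcal{F}|^2}{H(\mu,\mathcal{A},\mathcal{B})}\,dx\,dy$. Then $\Theta_F$ is not gauge-invariant: there is no such $H$ for which $\Theta_{F,\phi\cdot D}=\Theta_{F,D}$ holds for all gauges $\phi$ on $\Omega$ and all $D\in\mathcal{BV}(\Omega)$ with $\mathcal{F}\not\equiv0$.
   Context: $\mathcal{BV}(\Omega)$ is the set of quadruples $(\mu,\mathcal{A},\mathcal{B},\mathcal{F})$ of continuous complex functions on the domain $\Omega$ with $|\mu|<1$ pointwise (encoding $w_{\bar z}-\mu w_z+\mathcal{A}w+\mathcal{B}\bar w=\mathcal{F}$). A gauge is a $C^1$ nowhere-vanishing complex function $\phi$ on $\Omega$, acting by $\phi\cdot(\mu,\mathcal{A},\mathcal{B},\mathcal{F})=(\mu,\ \mathcal{A}-\phi_{\bar z}/\phi+\mu\phi_z/\phi,\ \mathcal{B}\phi/\bar\phi,\ \phi\mathcal{F})$. *)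

(* Defs.v *)
From Stdlib Require Import Reals.
From Coquelicot Require Import Coquelicot.
Open Scope R_scope.

Definition connected_set (O : C -> Prop) : Prop :=
  forall U V : C -> Prop, open U -> open V ->
    (forall z, O z -> U z \/ V z) ->
    (forall z, O z -> U z -> V z -> False) ->
    (exists z, O z /\ U z) -> (exists z, O z /\ V z) -> False.

Definition is_domain (O : C -> Prop) : Prop :=
  (exists z, O z) /\ open O /\ connected_set O.

Definition dRe_x (f : C -> C) (z : C) : R :=
  Derive (fun t => Re (f (Re z + t, Im z))) 0.
Definition dIm_x (f : C -> C) (z : C) : R :=
  Derive (fun t => Im (f (Re z + t, Im z))) 0.
Definition dRe_y (f : C -> C) (z : C) : R :=
  Derive (fun t => Re (f (Re z, Im z + t))) 0.
Definition dIm_y (f : C -> C) (z : C) : R :=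
  Derive (fun t => Im (f (Re z, Im z + t))) 0.

Definition dx (f : C -> C) (z : C) : C := (dRe_x f z, dIm_x f z).
Definition dy (f : C -> C) (z : C) : C := (dRe_y f z, dIm_y f z).

Definition dz (f : C -> C) (z : C) : C :=
  Cmult (RtoC (/2)) (Cminus (dx f z) (Cmult Ci (dy f z))).
Definition dzbar (f : C -> C) (z : C) : C :=
  Cmult (RtoC (/2)) (Cplus (dx f z) (Cmult Ci (dy f z))).

Definition C1_on (O : C -> Prop) (f : C -> C) : Prop :=
  forall z, O z ->
    continuous f z /\
    ex_derive (fun t => Re (f (Re z + t, Im z))) 0 /\
    ex_derive (fun t => Im (f (Re z + t, Im z))) 0 /\
    ex_derive (fun t => Re (f (Re z, Im z + t))) 0 /\
    ex_derive (fun t => Im (f (Re z, Im z + t))) 0 /\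
    continuous (dRe_x f) z /\ continuous (dIm_x f) z /\
    continuous (dRe_y f) z /\ continuous (dIm_y f) z.

Definition gauge (O : C -> Prop) (phi : C -> C) : Prop :=
  C1_on O phi /\ (forall z, O z -> phi z <> RtoC 0).

(** Quadruples (mu, A, B, F); only their values on O matter. *)
Record BVdata := mkBV {
  bv_mu : C -> C; bv_A : C -> C; bv_B : C -> C; bv_F : C -> C }.

Definition in_BV (O : C -> Prop) (D : BVdata) : Prop :=
  forall z, O z ->
    continuous (bv_mu D) z /\ continuous (bv_A D) z /\
    continuous (bv_B D) z /\ continuous (bv_F D) z /\
    Cmod (bv_mu D z) < 1.

Definition gauge_act (phi : C -> C) (D : BVdata) : BVdata :=
  mkBV (bv_mu D)
    (fun z => Cplus (Cminus (bv_A D z) (Cdiv (dzbar phi z) (phi z)))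
                    (Cdiv (Cmult (bv_mu D z) (dz phi z)) (phi z)))
    (fun z => Cmult (bv_B D z) (Cdiv (phi z) (Cconj (phi z))))
    (fun z => Cmult (phi z) (bv_F D z)).

Definition Theta_density (H : C * C * C -> C) (D : BVdata) (z : C) : C :=
  Cdiv (RtoC (Cmod (bv_F D z) ^ 2)) (H (bv_mu D z, bv_A D z, bv_B D z)).

(* Main.v *)
Require Import Defs.
From Stdlib Require Import Reals Lra FunctionalExtensionality.
From Coquelicot Require Import Coquelicot.
Open Scope R_scope.

Definition phi2 : C -> C := fun _ => RtoC 2.
Definition D0 : BVdata := mkBV (fun _ => RtoC 0) (fun _ => RtoC 0) (fun _ => RtoC 0) (fun _ => RtoC 1).

Lemma dphi2 : forall z, dx phi2 z = RtoC 0 /\ dy phi2 z = RtoC 0.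
Proof.
  intro z; unfold dx, dy, dRe_x, dIm_x, dRe_y, dIm_y, phi2; simpl.
  rewrite !Derive_const; split; reflexivity.
Qed.

Lemma gauge_phi2 O : gauge O phi2.
Proof.
  split.
  - intros z _.
    assert (E1 : dRe_x phi2 = fun _ => 0) by
      (apply functional_extensionality; intro; unfold dRe_x, phi2; simpl; apply Derive_const).
    assert (E2 : dIm_x phi2 = fun _ => 0) by
      (apply functional_extensionality; intro; unfold dIm_x, phi2; simpl; apply Derive_const).
    assert (E3 : dRe_y phi2 = fun _ => 0) by
      (apply functional_extensionality; intro; unfold dRe_y, phi2; simpl; apply Derive_const).
    assert (E4 : dIm_y phi2 = fun _ => 0) by
      (apply functional_extensionality; intro; unfold dIm_y, phi2; simpl; apply Derive_const).
    rewrite E1, E2, E3, E4.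
    unfold phi2; simpl.
    repeat split; try apply continuous_const; apply ex_derive_const.
  - intros z _ H. unfold phi2 in H. injection H. lra.
Qed.

Theorem lemma8p4 (O : C -> Prop) (HO : is_domain O) :
  ~ exists H : C * C * C -> C,
      (forall p : C * C * C, Cmod (fst (fst p)) < 1 -> continuous H p) /\
      (forall p : C * C * C, Cmod (fst (fst p)) < 1 -> H p <> RtoC 0) /\
      (forall (phi : C -> C) (D : BVdata),
          gauge O phi -> in_BV O D ->
          (exists z, O z /\ bv_F D z <> RtoC 0) ->
          forall z, O z ->
            Theta_density H (gauge_act phi D) z = Theta_density H D z).
Proof.
  intros [H [_ [Hnz Hinv]]].
  destruct HO as [[z0 Hz0] _].
  assert (HBV : in_BV O D0).
  { intros z _; simpl. repeat split; try apply continuous_const.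
    rewrite Cmod_0; lra. }
  assert (HF : exists z, O z /\ bv_F D0 z <> RtoC 0).
  { exists z0; split; auto. simpl. intro E; injection E; lra. }
  specialize (Hinv phi2 D0 (gauge_phi2 O) HBV HF z0 Hz0).
  unfold Theta_density, gauge_act in Hinv; simpl in Hinv.
  destruct (dphi2 z0) as [Ex Ey].
  unfold dzbar, dz in Hinv. rewrite Ex, Ey in Hinv.
  set (h := H (RtoC 0, RtoC 0, RtoC 0)).
  assert (HA : Cplus (Cminus (RtoC 0)
     (Cdiv (Cmult (RtoC (/ 2)) (Cplus (RtoC 0) (Cmult Ci (RtoC 0)))) (phi2 z0)))
     (Cdiv (Cmult (RtoC 0) (Cmult (RtoC (/ 2)) (Cminus (RtoC 0) (Cmult Ci (RtoC 0)))))
        (phi2 z0)) = RtoC 0).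
  { unfold phi2. apply injective_projections; simpl; field; lra. }
  assert (HB : Cmult (RtoC 0) (Cdiv (phi2 z0) (Cconj (phi2 z0))) = RtoC 0).
  { unfold phi2. apply injective_projections; simpl; field; lra. }
  rewrite HA, HB in Hinv. fold h in Hinv.
  assert (hnz : h <> RtoC 0) by (apply Hnz; simpl; rewrite Cmod_0; lra).
  assert (M1 : Cmod (Cmult (phi2 z0) (RtoC 1)) = 2).
  { unfold phi2. rewrite Cmult_1_r, Cmod_R, Rabs_pos_eq; lra. }
  rewrite M1, Cmod_1 in Hinv.
  assert (K : forall a, Cmult (Cdiv a h) h = a) by (intro a; field; exact hnz).
  assert (E : RtoC (2 * (2 * 1)) = RtoC (1 * (1 * 1))).
  { rewrite <- (K (RtoC (2 * (2 * 1)))), Hinv, K. reflexivity. }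
  injection E. lra.
Qed.
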